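(* Let $A:\mathbb{R}^n\rightrightarrows\mathbb{R}^n$ be a maximally monotone operator, let $x^*$ satisfy $0\in A(x^* )$, and let $\tilde A=I-J_A$ where $J_A=(I+A)^{-1}$. Assume $\tilde A$ is differentiable. Let $X:[0,\infty)\to\mathbb{R}^n$ be a solution of $$\dot X(t)=J_A(X(t))-X(t)=-\tilde A(X(t)),\qquad X(0)=x_0.$$ Then for every $t>0$, $$\|\dot X(t)\|^2=\|\tilde A(X(t))\|^2\leqslant\frac{\|x_0-x^*\|^2}{2t}.$$
   Context: $J_A=(I+A)^{-1}$ is the resolvent of $A$ (single-valued and defined on all of $\mathbb{R}^n$ since $A$ is maximally monotone); $\tilde A=I-J_A$ is the Yosida approximation of $A$. $\|\cdot\|$ is the Euclidean norm. *)

(* Defs.v *)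
From HB Require Import structures.
From mathcomp Require Import all_boot all_order all_algebra.
From mathcomp Require Import all_classical all_reals all_analysis.
Set Implicit Arguments. Unset Strict Implicit. Unset Printing Implicit Defensive.
Import Order.TTheory GRing.Theory Num.Theory.
Import numFieldNormedType.Exports.
Local Open Scope classical_set_scope.
Local Open Scope ring_scope.

Definition dotv {R : realType} {n : nat} (u v : 'rV[R]_n) : R :=
  \sum_(i < n) u 0 i * v 0 i.
Definition enorm {R : realType} {n : nat} (u : 'rV[R]_n) : R :=
  Num.sqrt (dotv u u).

Definition monotone_op {R : realType} {n : nat} (A : 'rV[R]_n -> set 'rV[R]_n) :=
  forall x y u v, A x u -> A y v -> 0 <= dotv (u - v) (x - y).

Definition maximally_monotone {R : realType} {n : nat}
  (A : 'rV[R]_n -> set 'rV[R]_n) :=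
  monotone_op A /\
  forall B : 'rV[R]_n -> set 'rV[R]_n, monotone_op B ->
    (forall x, A x `<=` B x) -> B = A.

(* resolvent J_A = (I + A)^{-1}: J_A x is the (unique, for A maximally
   monotone) p with x ∈ p + A p, i.e. x - p ∈ A p. *)
Definition resolvent {R : realType} {n : nat} (A : 'rV[R]_n -> set 'rV[R]_n)
  (x : 'rV[R]_n) : 'rV[R]_n :=
  xget 0 [set p | A p (x - p)].

Definition yosida {R : realType} {n : nat} (A : 'rV[R]_n -> set 'rV[R]_n)
  (x : 'rV[R]_n) : 'rV[R]_n := x - resolvent A x.

(* Main.v *)
Require Import Defs.
From HB Require Import structures.
From mathcomp Require Import all_boot all_order all_algebra.
From mathcomp Require Import all_classical all_reals all_analysis.
From mathcomp Require Import ring lra.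
Import Order.TTheory GRing.Theory Num.Theory.
Import numFieldNormedType.Exports.
Local Open Scope classical_set_scope.
Local Open Scope ring_scope.
Section Dot.
Context {R : realType} {n : nat}.
Implicit Types u v w : 'rV[R]_n.

Lemma dotvC u v : dotv u v = dotv v u.
Proof. by apply: eq_bigr => i _; rewrite mulrC. Qed.

Lemma dotvDl u v w : dotv (u + v) w = dotv u w + dotv v w.
Proof. by rewrite /dotv -big_split; apply: eq_bigr => i _; rewrite mxE mulrDl. Qed.

Lemma dotvZl (a : R) u v : dotv (a *: u) v = a * dotv u v.
Proof. by rewrite /dotv big_distrr; apply: eq_bigr => i _; rewrite !mxE /= mulrA. Qed.

Lemma dotvNl u v : dotv (- u) v = - dotv u v.
Proof. by rewrite -scaleN1r dotvZl mulN1r. Qed.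

Lemma dotvBl u v w : dotv (u - v) w = dotv u w - dotv v w.
Proof. by rewrite dotvDl dotvNl. Qed.

Lemma dotv0l v : dotv 0 v = 0.
Proof. by rewrite -(scale0r 0) dotvZl mul0r. Qed.

Lemma dotvDr u v w : dotv w (u + v) = dotv w u + dotv w v.
Proof. by rewrite dotvC dotvDl !(dotvC w). Qed.

Lemma dotvZr (a : R) u v : dotv v (a *: u) = a * dotv v u.
Proof. by rewrite dotvC dotvZl dotvC. Qed.

Lemma dotvNr u v : dotv v (- u) = - dotv v u.
Proof. by rewrite dotvC dotvNl dotvC. Qed.

Lemma dotvBr u v w : dotv w (u - v) = dotv w u - dotv w v.
Proof. by rewrite dotvDr dotvNr. Qed.

Lemma dotv0r v : dotv v 0 = 0.
Proof. by rewrite dotvC dotv0l. Qed.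

Lemma dotv_ge0 u : 0 <= dotv u u.
Proof. by apply: sumr_ge0 => i _; rewrite -expr2 sqr_ge0. Qed.

Lemma dotv_suml m (F : 'I_m -> 'rV[R]_n) w :
  dotv (\sum_(i < m) F i) w = \sum_(i < m) dotv (F i) w.
Proof.
exact: (big_morph (fun u => dotv u w) (fun u v => dotvDl u v w) (dotv0l w)).
Qed.

Lemma dotv_sumr m (F : 'I_m -> 'rV[R]_n) w :
  dotv w (\sum_(i < m) F i) = \sum_(i < m) dotv w (F i).
Proof.
by rewrite dotvC dotv_suml; apply: eq_bigr => i _; rewrite dotvC.
Qed.

Lemma enorm_sq u : enorm u ^+ 2 = dotv u u.
Proof. by rewrite /enorm sqr_sqrtr // dotv_ge0. Qed.

Lemma enormN u : enorm (- u) = enorm u.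
Proof. by rewrite /enorm dotvNl dotvNr opprK. Qed.

Lemma cvg_dotv {T : Type} (F : set_system T) {FF : Filter F}
  (f g : T -> 'rV[R]_n) (a b : 'rV[R]_n) :
  f @ F --> a -> g @ F --> b -> (fun x => dotv (f x) (g x)) @ F --> dotv a b.
Proof.
move=> fa gb; rewrite /dotv.
apply: (@cvg_big R 'I_n +%R 0 xpredT add_continuous T F (index_enum _)
  (fun i x => f x 0 i * g x 0 i) (fun i => a 0 i * b 0 i) FF).
move=> i _; apply: cvgM.
  exact: (cvg_comp _ _ fa (@coord_continuous R 1 n 0 i a)).
exact: (cvg_comp _ _ gb (@coord_continuous R 1 n 0 i b)).
Qed.

End Dot.
Arguments cvg_dotv {R n T F FF f g a b}.
Section Fin.
Context {R : realType} {n m : nat}.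
Variables (b c : 'I_m -> 'rV[R]_n).
Hypothesis mono : forall i j, dotv (c i - c j) (b i - b j) <= 0.

Definition Kf (l : 'rV[R]_m) := \sum_(i < m) l 0 i * dotv (c i) (b i).
Definition Vf (l : 'rV[R]_m) := \sum_(i < m) l 0 i *: (b i + c i).
Definition psi (l : 'rV[R]_m) := Kf l - dotv (Vf l) (Vf l) / 4.
Definition simplex := [set l : 'rV[R]_m | (forall i, 0 <= l 0 i) /\ \sum_(i < m) l 0 i = 1].

Lemma psi_le0 l : simplex l -> psi l <= 0.
Proof.
move=> [l0 l1].
set B := \sum_(i < m) l 0 i *: b i.
set C := \sum_(i < m) l 0 i *: c i.
have eV : Vf l = B + C.
  by rewrite /Vf /B /C -big_split; apply: eq_bigr => i _; rewrite scalerDr.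
have hC w : \sum_(i < m) l 0 i * dotv (c i) w = dotv C w.
  by rewrite /C dotv_suml; apply: eq_bigr => i _; rewrite dotvZl.
have hB w : \sum_(i < m) l 0 i * dotv w (b i) = dotv w B.
  by rewrite /B dotv_sumr; apply: eq_bigr => i _; rewrite dotvZr.
have row i : \sum_(j < m) l 0 j * dotv (c i - c j) (b i - b j) =
    dotv (c i) (b i) - dotv (c i) B - dotv C (b i) + Kf l.
  have -> : \sum_(j < m) l 0 j * dotv (c i - c j) (b i - b j) =
     \sum_(j < m) (l 0 j * dotv (c i) (b i) - l 0 j * dotv (c i) (b j)
        - l 0 j * dotv (c j) (b i) + l 0 j * dotv (c j) (b j)).
    by apply: eq_bigr => j _; rewrite dotvBl !dotvBr; ring.
  rewrite big_split !sumrB /= hB hC -/(Kf l) -big_distrl /= l1 mul1r.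
  done.
have dbl : \sum_(i < m) l 0 i * \sum_(j < m) l 0 j * dotv (c i - c j) (b i - b j)
    = 2 * Kf l - 2 * dotv C B.
  have -> : \sum_(i < m) l 0 i * \sum_(j < m) l 0 j * dotv (c i - c j) (b i - b j)
     = \sum_(i < m) (l 0 i * dotv (c i) (b i) - l 0 i * dotv (c i) B
         - l 0 i * dotv C (b i) + l 0 i * Kf l).
    by apply: eq_bigr => i _; rewrite row; ring.
  rewrite big_split !sumrB /= hB hC -/(Kf l) -big_distrl /= l1 mul1r.
  ring.
have dle : \sum_(i < m) l 0 i * \sum_(j < m) l 0 j * dotv (c i - c j) (b i - b j) <= 0.
  rewrite -oppr_ge0 -sumrN; apply: sumr_ge0 => i _.
  rewrite -mulrN; apply: mulr_ge0 => //.
  rewrite -sumrN; apply: sumr_ge0 => j _.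
  rewrite -mulrN; apply: mulr_ge0 => //; rewrite oppr_ge0; exact: mono.
have q := dotv_ge0 (B - C).
rewrite /psi eV.
move: q; rewrite !dotvDl !dotvDr ?dotvNl ?dotvNr (dotvC B C) => q.
lra.
Qed.

End Fin.
Section Fin2.
Context {R : realType} {n m : nat}.
Variables (b c : 'I_m -> 'rV[R]_n).
Hypothesis mono : forall i j, dotv (c i - c j) (b i - b j) <= 0.

Let S := @simplex R m.

Lemma Kf_lin (x y : R) (l l' : 'rV[R]_m) :
  Kf b c (x *: l + y *: l') = x * Kf b c l + y * Kf b c l'.
Proof.
rewrite /Kf !big_distrr -big_split; apply: eq_bigr => i _; rewrite !mxE /=; ring.
Qed.

Lemma Vf_lin (x y : R) (l l' : 'rV[R]_m) :
  Vf b c (x *: l + y *: l') = x *: Vf b c l + y *: Vf b c l'.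
Proof.
rewrite /Vf !scaler_sumr -big_split; apply: eq_bigr => i _.
by rewrite !mxE /= scalerDl !scalerA.
Qed.

Lemma Kf_e j : Kf b c (\row_k (k == j)%:R) = dotv (c j) (b j).
Proof.
rewrite /Kf (bigD1 j) //= big1 ?addr0; first by rewrite mxE eqxx mul1r.
by move=> k kj; rewrite mxE (negbTE kj) mul0r.
Qed.

Lemma Vf_e j : Vf b c (\row_k (k == j)%:R) = b j + c j.
Proof.
rewrite /Vf (bigD1 j) //= big1 ?addr0; first by rewrite mxE eqxx scale1r.
by move=> k kj; rewrite mxE (negbTE kj) scale0r.
Qed.

Lemma coordc (i : 'I_m) : continuous (fun l : 'rV[R]_m => l 0 i).
Proof. exact: coord_continuous. Qed.

Lemma psi_cont : continuous (psi b c).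
Proof.
have cK : continuous (Kf b c).
  move=> l; rewrite /Kf.
  apply: (@cvg_big R 'I_m +%R 0 xpredT add_continuous _ (nbhs l) (index_enum _)
    (fun i l => l 0 i * dotv (c i) (b i)) (fun i => l 0 i * dotv (c i) (b i)) _) => i _.
  by apply: cvgMr_tmp; exact: coordc.
have cV : continuous (Vf b c).
  move=> l; rewrite /Vf.
  apply: (@cvg_big 'rV[R]_n 'I_m +%R 0 xpredT add_continuous _ (nbhs l) (index_enum _)
    (fun i l => l 0 i *: (b i + c i)) (fun i => l 0 i *: (b i + c i)) _) => i _.
  by apply: cvgZr_tmp; exact: coordc.
rewrite (_ : psi b c = Kf b c - (fun l => dotv (Vf b c l) (Vf b c l) / 4));
  last by apply/funext.
move=> l.
have := cvgB (cK l) (@cvgMr_tmp _ _ _ _ _ _ (4^-1) (cvg_dotv (cV l) (cV l))).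
exact.
Qed.

End Fin2.
Section Fin3.
Context {R : realType} {n m : nat}.
Variables (b c : 'I_m -> 'rV[R]_n).
Hypothesis mono : forall i j, dotv (c i - c j) (b i - b j) <= 0.

Lemma e_in (j : 'I_m) : @simplex R m (\row_k (k == j)%:R).
Proof.
split; first by move=> i; rewrite mxE ler0n.
rewrite (bigD1 j) //= big1 ?addr0; first by rewrite mxE eqxx.
by move=> k kj; rewrite mxE (negbTE kj).
Qed.

Lemma simplex_closed : closed (@simplex R m).
Proof.
have -> : @simplex R m = (\bigcap_(i in setT) [set l : 'rV[R]_m | 0 <= l 0 i]) `&`
   ((fun l : 'rV[R]_m => \sum_(i < m) l 0 i) @^-1` [set 1]).
  apply/seteqP; split => l /=.
    by move=> [h1 h2]; split => // i _; exact: h1.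
  by move=> [h1 h2]; split => // i; exact: h1.
apply: closedI.
  apply: closed_bigI => i _.
  apply: (@preimage_closed _ _ (fun l : 'rV[R]_m => l 0 i) [set x : R | 0 <= x]).
    by move=> x _; exact: coordc.
  exact: closed_ge.
apply: (@preimage_closed _ _ (fun l : 'rV[R]_m => \sum_(i < m) l 0 i) [set (1:R)]);
  last exact: closed_eq.
move=> x _.
apply: (@cvg_big R 'I_m +%R 0 xpredT add_continuous _ (nbhs x) (index_enum _)
    (fun i l => l 0 i) (fun i => x 0 i) _) => i _.
exact: coordc.
Qed.

Lemma simplex_compact : compact (@simplex R m).
Proof.
apply: (@subclosed_compact _ _ [set v : 'rV[R]_m | forall i, v ord0 i \in `[(0:R), 1]]).
- exact: simplex_closed.
- apply: (@rV_compact _ _ (fun=> `[(0:R), 1]%classic)).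
  by move=> _; apply: segment_compact.
move=> l [l0 l1] i /=; rewrite in_itv /= l0 /= -l1.
rewrite (bigD1 i) //= lerDl; apply: sumr_ge0 => k _; exact: l0.
Qed.

Lemma finite_DF : exists p, forall j, 0 <= dotv (c j - p) (p - b j).
Proof.
have [m0|mpos] := posnP m.
  by exists 0 => -[k hk]; exfalso; move: hk; rewrite m0.
have S0 : (@simplex R m) !=set0 by exists (\row_k (k == Ordinal mpos)%:R); exact: e_in.
have cs : {within @simplex R m, continuous (psi b c)}.
  by apply: continuous_subspaceT; exact: psi_cont.
have [ls lsS lsmax] := EVT_max_rV S0 simplex_compact cs.
have lsS' : simplex ls by move: lsS; rewrite inE.
have Pv := @psi_le0 R n m b c mono ls lsS'.
exists (2^-1 *: Vf b c ls) => j.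
have H t : 0 < t <= 1 ->
    psi b c ((1 - t) *: ls + t *: \row_k (k == j)%:R) <= psi b c ls.
  move=> /andP[t0 t1]; apply: lsmax; rewrite inE.
  have [e0 e1] := e_in j; case: lsS' => [l0 l1].
  split.
    move=> i; rewrite !mxE; apply: addr_ge0; apply: mulr_ge0 => //.
    - by rewrite subr_ge0.
    - exact: ltW.
  rewrite (eq_bigr (fun i => (1 - t) * ls 0 i + t * (\row_k (k == j)%:R : 'rV[R]_m) 0 i));
    last by move=> i _; rewrite !mxE.
  rewrite big_split /= -!big_distrr /= l1 e1; ring.
move: Pv H; rewrite /psi.
set K := Kf b c ls; set V := Vf b c ls.
set v := b j + c j; set k := dotv (c j) (b j).
move=> Pv H.
have hQ := dotv_ge0 (V - v).
have H' t : 0 < t <= 1 ->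
   t * (k - K + dotv V V / 2 - dotv V v / 2)
   - t * (t * (dotv (V - v) (V - v) / 4)) <= 0.
  move=> ht; have := H t ht.
  rewrite Kf_lin Vf_lin Kf_e Vf_e -/K -/V -/v -/k.
  clearbody v k K V.
  rewrite !dotvDl !dotvDr !dotvZl !dotvZr ?dotvNl ?dotvNr (dotvC v V).
  move=> HH; nra.
set D := k - K + dotv V V / 2 - dotv V v / 2.
set Q := dotv (V - v) (V - v) / 4.
have Q0 : 0 <= Q by rewrite /Q divr_ge0.
have D0 : D <= 0.
  rewrite leNgt; apply/negP => Dpos.
  pose t := D / (D + Q).
  have DQ : 0 < D + Q by lra.
  have t0 : 0 < t by rewrite /t divr_gt0.
  have t1 : t <= 1 by rewrite /t ler_pdivrMr // mul1r; lra.
  have tQ : t * Q = D - t * D.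
    rewrite /t; field; lra.
  have := H' t; rewrite t0 t1 => /(_ isT); rewrite -/D -/Q tQ => h.
  have := mulr_gt0 (mulr_gt0 t0 t0) Dpos.
  nra.
have ev : dotv V v = dotv V (b j) + dotv V (c j) by rewrite /v dotvDr.
move: D0; rewrite /D ev /k.
rewrite dotvBl !dotvBr !dotvZl !dotvZr (dotvC (c j) V).
lra.
Qed.

End Fin3.
Section Minty.
Context {R : realType} {n : nat}.
Implicit Types u v w p y : 'rV[R]_n.

Lemma coord_sq_le (p : 'rV[R]_n) i : p 0 i ^+ 2 <= dotv p p.
Proof.
rewrite /dotv (bigD1 i) //= -expr2 lerDl.
by apply: sumr_ge0 => k _; rewrite -expr2 sqr_ge0.
Qed.

Lemma ball_ident y xs p :
  dotv (y - p) (p - xs) =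
  dotv (y - xs) (y - xs) / 4 - dotv (p - 2^-1 *: (y + xs)) (p - 2^-1 *: (y + xs)).
Proof.
rewrite !dotvDl !dotvDr ?dotvNl ?dotvNr !dotvZl !dotvZr !dotvDl !dotvDr.
rewrite (dotvC p y) (dotvC xs y) (dotvC p xs).
lra.
Qed.

Lemma cont_g y a a' :
  continuous (fun p : 'rV[R]_n => dotv (y - p - a') (p - a)).
Proof.
have c1 : continuous (fun q : 'rV[R]_n => y - q - a').
  rewrite (_ : (fun q => y - q - a') = (cst y - id) - cst a'); last by apply/funext.
  move=> q; apply: continuousB; last exact: cst_continuous.
  by apply: continuousB; [exact: cst_continuous | exact: cvg_id].
have c2 : continuous (fun q : 'rV[R]_n => q - a).
  rewrite (_ : (fun q => q - a) = id - cst a); last by apply/funext.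
  by move=> q; apply: continuousB; [exact: cvg_id | exact: cst_continuous].
move=> p; exact: (cvg_dotv (c1 p) (c2 p)).
Qed.

Lemma subBB (y u w : 'rV[R]_n) : y - u - (y - w) = w - u.
Proof. by rewrite opprB addrC addrA subrK. Qed.

Lemma minty (A : 'rV[R]_n -> set 'rV[R]_n) :
  maximally_monotone A -> forall xs, A xs 0 -> forall y, exists p, A p (y - p).
Proof.
move=> [monA maxA] xs Axs y.
pose g (q : 'rV[R]_n * 'rV[R]_n) := [set p : 'rV[R]_n | 0 <= dotv (y - p - q.2) (p - q.1)].
have gcl q : closed (g q).
  apply: (@preimage_closed _ _ (fun p => dotv (y - p - q.2) (p - q.1)) [set x : R | 0 <= x]).
    by move=> x _; exact: cont_g.
  exact: closed_ge.
pose C := g (xs, 0).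
have Cc : compact C.
  pose m0 := 2^-1 *: (y + xs).
  pose r := dotv (y - xs) (y - xs) / 4.
  have r0 : 0 <= r by rewrite /r divr_ge0 // dotv_ge0.
  apply: (@subclosed_compact _ _
     [set v : 'rV[R]_n | forall i, v ord0 i \in `[m0 0 i - (r + 1), m0 0 i + (r + 1)]]).
  - exact: gcl.
  - apply: (@rV_compact _ _ (fun i => `[m0 0 i - (r + 1), m0 0 i + (r + 1)]%classic)).
    by move=> i; apply: segment_compact.
  move=> p; rewrite /C /g /= subr0 ball_ident -/m0 -/r => h i.
  clearbody m0.
  have h1 : (p - m0) 0 i ^+ 2 <= r.
    by apply: le_trans (coord_sq_le _ _) _; lra.
  move: h1; rewrite !mxE => h1.
  rewrite in_itv /=.
  have h2 : `|p 0 i - m0 0 i| <= r + 1.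
    rewrite -(ler_pXn2r (n := 2)) ?nnegrE ?normr_ge0 //; last by lra.
    rewrite real_normK ?num_real //; nra.
  move: h2; rewrite ler_norml => /andP[h3 h4].
  apply/andP; split; lra.
have step1 : exists p, forall a a', A a a' -> 0 <= dotv (y - p - a') (p - a).
  pose D := [set q : 'rV[R]_n * 'rV[R]_n | A q.1 q.2].
  pose f q := C `&` g q.
  have := Cc; rewrite compact_In0 => /(_ _ D f).
  case.
  - by exists g => // q _.
  - move=> D' D'D.
    pose s := (xs, 0) :: finmap.enum_fset D'.
    pose b (i : 'I_(size s)) := (nth (xs, 0) s i).1.
    pose c (i : 'I_(size s)) := y - (nth (xs, 0) s i).2.
    have sD q : q \in s -> D q.
      rewrite inE => /orP[/eqP -> //|h]; by have := D'D q h; rewrite inE.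
    have mono i j : dotv (c i - c j) (b i - b j) <= 0.
      have Di := sD _ (mem_nth (xs, 0) (ltn_ord i)).
      have Dj := sD _ (mem_nth (xs, 0) (ltn_ord j)).
      have := monA _ _ _ _ Di Dj.
      rewrite /c /b subBB -opprB dotvNl; lra.
    have [p hp] := finite_DF b c mono.
    have hq q : q \in s -> 0 <= dotv (y - p - q.2) (p - q.1).
      move=> qs.
      have hi : (index q s < size s)%N by rewrite index_mem.
      have := hp (Ordinal hi); rewrite /c /b /= nth_index //.
      by rewrite (addrAC y).
    exists p => q /= qD'; split.
      by have := hq (xs, 0); rewrite /g /=; apply; rewrite inE eqxx.
    by apply: hq; rewrite inE qD' orbT.
  move=> p Hp; exists p => a a' Aaa'.
  by have [_ ] := Hp (a, a') Aaa'.
have [p hp] := step1.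
exists p.
pose B x u := A x u \/ (x = p /\ u = y - p).
have monB : monotone_op B.
  move=> x1 x2 u1 u2 [H1|[-> ->]] [H2|[-> ->]].
  - exact: monA H1 H2.
  - have := hp _ _ H1.
    rewrite (_ : u1 - (y - p) = - (y - p - u1)); last by rewrite [RHS]opprB.
    rewrite (_ : x1 - p = - (p - x1)); last by rewrite [RHS]opprB.
    by rewrite dotvNl dotvNr opprK.
  - exact: hp _ _ H2.
  - by rewrite subrr dotv0l.
have eBA := maxA B monB (fun x u Au => or_introl Au).
have : B p (y - p) by right.
by rewrite eBA.
Qed.

End Minty.
Section Deriv.
Context {R : realType}.

Lemma is_derive_chain (V W : normedModType R) (f : R -> V) (g : V -> W) (s : R) (df : V) :
  is_derive s 1 f df -> differentiable g (f s) ->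
  is_derive s 1 (g \o f) ('d g (f s) df).
Proof.
move=> hf hg.
have fd : differentiable f s by apply/derivable1_diffP; exact: ex_derive.
have gfd := differentiable_comp fd hg.
apply: DeriveDef; first by apply/derivable1_diffP.
have e : 'd f s 1 = df by rewrite -deriveE //; case: hf.
by rewrite deriveE // diff_comp //= e.
Qed.

Lemma is_derive_coord {n : nat} (f : R -> 'rV[R]_n) (s : R) (df : 'rV[R]_n) (i : 'I_n) :
  is_derive s 1 f df -> is_derive s 1 (fun r => f r 0 i) (df 0 i).
Proof.
move=> hf.
have @L : {linear 'rV[R]_n -> R}.
  by exists (fun N : 'rV[R]_n => N 0 i); do 2![eexists]; do ?[constructor];
     rewrite ?mxE// => ? *; rewrite ?mxE//; move=> ?; rewrite !mxE.
have Lc : continuous L by exact: coord_continuous.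
have := @is_derive_chain _ _ f L s df hf (@linear_differentiable R _ _ L (f s) Lc).
by rewrite diff_lin.
Qed.

Lemma is_derive_dotv {n : nat} (f g : R -> 'rV[R]_n) (s : R) (df dg : 'rV[R]_n) :
  is_derive s 1 f df -> is_derive s 1 g dg ->
  is_derive s 1 (fun r => dotv (f r) (g r)) (dotv df (g s) + dotv (f s) dg).
Proof.
move=> hf hg.
have -> : (fun r => dotv (f r) (g r)) =
    \sum_(i < n) ((fun r => f r 0 i) * (fun r => g r 0 i)).
  by rewrite fct_sumE; apply/funext => r.
apply: (is_derive_eq (f' :=
   (\sum_(i < n) ((fun r => f r 0 i) s *: dg 0 i + (fun r => g r 0 i) s *: df 0 i)))).
  apply: is_derive_sum => i.
  exact: is_deriveM (is_derive_coord _ _ _ i hf) (is_derive_coord _ _ _ i hg).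
rewrite /dotv -big_split /=; apply: eq_bigr => i _.
by rewrite addrC (mulrC (df 0 i)).
Qed.

End Deriv.
Section Yos.
Context {R : realType} {n : nat}.
Implicit Types (A : 'rV[R]_n -> set 'rV[R]_n) (x y h : 'rV[R]_n).

Lemma J_in A xs : maximally_monotone A -> A xs 0 ->
  forall x, A (resolvent A x) (x - resolvent A x).
Proof.
move=> hm hx x; rewrite /resolvent; exact: (xgetPex 0 (@minty R n A hm xs hx x)).
Qed.

Lemma vec_id4 (x y u v : 'rV[R]_n) : x - y = ((x - u) - (y - v)) + (u - v).
Proof. by apply/matrixP => i j; rewrite !mxE; ring. Qed.

Lemma Y_mono A : monotone_op A ->
  (forall x, A (resolvent A x) (x - resolvent A x)) ->
  forall x y, dotv (yosida A x - yosida A y) (yosida A x - yosida A y)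
              <= dotv (yosida A x - yosida A y) (x - y).
Proof.
move=> monA HJ x y.
have h := monA _ _ _ _ (HJ x) (HJ y).
rewrite /yosida [in X in _ <= X](vec_id4 x y (resolvent A x) (resolvent A y)).
rewrite (dotvDr (x - resolvent A x - (y - resolvent A y))
                (resolvent A x - resolvent A y)); lra.
Qed.

Lemma Y_star A xs : monotone_op A -> A xs 0 ->
  (forall x, A (resolvent A x) (x - resolvent A x)) ->
  forall x, dotv (yosida A x) (yosida A x) <= dotv (yosida A x) (x - xs).
Proof.
move=> monA hxs HJ x.
have h := monA _ _ _ _ (HJ x) hxs.
rewrite subr0 in h.
have -> : x - xs = (x - resolvent A x) + (resolvent A x - xs).
  by apply/matrixP => i j; rewrite !mxE; ring.
rewrite /yosida (dotvDr (x - resolvent A x)); lra.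
Qed.

Lemma dY_pos A : monotone_op A ->
  (forall x, A (resolvent A x) (x - resolvent A x)) ->
  (forall x, differentiable (yosida A) x) ->
  forall x h, 0 <= dotv ('d (yosida A) x h) h.
Proof.
move=> monA HJ hd x h.
rewrite -deriveE //.
have cv := @diff_derivable R _ _ (yosida A) x h (hd x).
pose u r := dotv (r^-1 *: ((yosida A \o shift x) (r *: h) - yosida A x)) h.
have cd : u r @[r --> (0 : R)^'] --> dotv ('D_h (yosida A) x) h.
  exact: (cvg_dotv cv (cvg_cst h)).
apply: (closed_cvg (u_ := u) [set r : R | 0 <= r] (@closed_ge R 0) _ _ cd).
near=> r.
have r0 : r != 0 by near: r; exact: nbhs_dnbhs_neq.
rewrite /u /= dotvZl.
set d := yosida A (r *: h + x) - yosida A x.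
have hm := Y_mono A monA HJ (r *: h + x) x.
rewrite -/d (_ : r *: h + x - x = r *: h) in hm; last by rewrite addrK.
rewrite dotvZr in hm.
have hq := dotv_ge0 d.
have e : r^-1 * dotv d h = r^-1 ^+ 2 * (r * dotv d h).
  by rewrite expr2 -!mulrA (mulrA r^-1 r) mulVf // mul1r.
rewrite e; apply: mulr_ge0; [exact: sqr_ge0 | lra].
Unshelve. all: by end_near.
Qed.

End Yos.
Lemma scaleRE {R : realType} (x y : R) : x *: y = x * y.
Proof. by []. Qed.

Theorem theorem3 (R : realType) (n : nat) (A : 'rV[R]_n -> set 'rV[R]_n)
  (xstar x0 : 'rV[R]_n) (X : R -> 'rV[R]_n) :
  maximally_monotone A ->
  A xstar 0 ->
  (forall x, differentiable (yosida A) x) ->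
  X 0 = x0 ->
  {within `[0, +oo[, continuous X} ->
  (forall t : R, 0 < t -> is_derive t 1 X (resolvent A (X t) - X t)) ->
  forall t : R, 0 < t ->
    enorm ('D_1 X t) ^+ 2 = enorm (yosida A (X t)) ^+ 2 /\
    enorm (yosida A (X t)) ^+ 2 <= enorm (x0 - xstar) ^+ 2 / (2 * t).
Proof.
move=> hmax hxs hdiff hX0 hcont hder t t0.
have monA := hmax.1.
have HJ := J_in A xstar hmax hxs.
have hD s : 0 < s -> 'D_1 X s = - yosida A (X s).
  by move=> s0; case: (hder s s0) => _ ->; rewrite /yosida opprB.
split; first by rewrite hD // enormN.
pose a s := yosida A (X s).
pose Pa s := dotv (a s) (a s).
pose Pb s := dotv (X s - xstar) (X s - xstar).
pose E : R -> R := (@id R) * Pa + cst (2^-1) * Pb.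
have Ev s : E s = s * Pa s + 2^-1 * Pb s by [].
have dE (s : R) : 0 < s -> is_derive s 1 E
   (s *: (dotv ('d (yosida A) (X s) (resolvent A (X s) - X s)) (a s)
          + dotv (a s) ('d (yosida A) (X s) (resolvent A (X s) - X s)))
    + Pa s *: 1
    + (2^-1 *: (dotv (resolvent A (X s) - X s) (X s - xstar)
               + dotv (X s - xstar) (resolvent A (X s) - X s))
       + Pb s *: 0)).
  move=> s0.
  have dX := hder s s0.
  have da : is_derive s 1 a ('d (yosida A) (X s) (resolvent A (X s) - X s)).
    have h1 := @is_derive_chain _ _ _ X (yosida A) s _ dX (hdiff (X s)).
    exact: h1.
  have dPa : is_derive s 1 Pa _ := is_derive_dotv _ _ _ _ _ da da.
  have dXm : is_derive s 1 (fun r => X r - xstar) (resolvent A (X s) - X s - 0).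
    exact: (is_deriveB dX (is_derive_cst xstar s 1)).
  rewrite subr0 in dXm.
  have dPb : is_derive s 1 Pb _ := is_derive_dotv _ _ _ _ _ dXm dXm.
  exact: (is_deriveD (is_deriveM (is_derive_id s 1) dPa)
                     (is_deriveM (is_derive_cst (2^-1 : R) s 1) dPb)).
have dEle (s : R) : 0 < s -> 'D_1 E s <= 0.
  move=> s0; rewrite (@derive_val _ _ _ _ _ _ _ (dE s s0)).
  have e1 : resolvent A (X s) - X s = - a s by rewrite /a /yosida opprB.
  rewrite e1 linearN /= !dotvNl !dotvNr.
  have p5 := dY_pos A monA HJ hdiff (X s) (a s).
  have p4 := Y_star A xstar monA hxs HJ (X s).
  rewrite -/(a s) in p4.
  rewrite (dotvC (a s) ('d (yosida A) (X s) (a s))) (dotvC (X s - xstar) (a s)).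
  rewrite !scaleRE /Pa.
  have := mulr_ge0 (ltW s0) p5.
  lra.
have cE : {within `[0, t], continuous E}.
  have cX : {within `[0, t], continuous X}.
    apply: (continuous_subspaceW _ hcont) => r /=.
    by rewrite !in_itv /= => /andP[-> _].
  apply/subspace_continuousP => r hr.
  have cXr : X @ within `[0, t] (nbhs r) --> X r.
    by move/subspace_continuousP: cX; apply.
  have car : a @ within `[0, t] (nbhs r) --> a r.
    exact: (cvg_comp _ _ cXr (differentiable_continuous (hdiff (X r)))).
  have cPa : Pa @ within `[0, t] (nbhs r) --> Pa r.
    exact: (cvg_dotv car car).
  have cXm : (fun s => X s - xstar) @ within `[0, t] (nbhs r) --> X r - xstar.
    have := cvgB cXr (cvg_cst xstar); exact.
  have cPb : Pb @ within `[0, t] (nbhs r) --> Pb r.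
    exact: (cvg_dotv cXm cXm).
  have cid : (@id R) @ within `[0, t] (nbhs r) --> r by exact: cvg_within.
  have := cvgD (cvgM cid cPa)
               (cvgM (cvg_cst (2^-1 : R)) cPb).
  exact.
have hle : E t <= E 0.
  apply: (ler0_derive1_le_cc (a := 0) (b := t)).
  - move=> r; rewrite in_itv /= => /andP[r0 _].
    by case: (dE r r0).
  - move=> r; rewrite in_itv /= => /andP[r0 _].
    by rewrite derive1E; exact: dEle.
  - exact: cE.
  - by rewrite in_itv /= lexx ltW.
  - by rewrite in_itv /= lexx ltW.
  - exact: ltW.
move: hle; rewrite !Ev mul0r add0r /Pb hX0 -/(a t).
rewrite !enorm_sq ler_pdivlMr; last by rewrite mulr_gt0.
have := dotv_ge0 (X t - xstar).
rewrite /Pa.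
nra.
Qed.
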